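(* Consider any realization of a run of Algorithm 4 (described in the context) under the standing assumption. For every $k\in\mathcal{K}$, if $k\in\mathcal{U}$ then $\delta_k>3(1-\eta)\epsilon_H/(2L_H)$. Consequently, for every realization, \[ \delta_k\ \ge\ \bar\delta_{\min}:=\min\Big\{\delta_0,\ \tfrac{3\gamma_1(1-\eta)}{2L_H}\epsilon_H\Big\}\in(0,\infty)\quad\text{for all }k\in\mathcal{K}. \]
   Context: Let $f:\mathbb{R}^n\to\mathbb{R}$ with gradient $g=\nabla f$ and Hessian $H=\nabla^2f$; $\|\cdot\|$ is the Euclidean norm, $\lambda_{\min}$ the smallest eigenvalue, $\mathbb{S}^n$ the real symmetric $n\times n$ matrices. Write $f_k=f(x_k)$, $g_k=g(x_k)$, $H_k=H(x_k)$, $m_k(x)=f_k+g_k^T(x-x_k)+\tfrac12(x-x_k)^TH_k(x-x_k)$. Exact arithmetic is assumed. Algorithm 2 (truncated CG; inputs nonzero $g$, $H\in\mathbb{S}^n$, $\epsilon>0$, $\delta>0$, $\zeta\in(0,1)$, flag capCG, and $M\ge\|H\|$): $k_{\max}=\min\{n,\tfrac12\sqrt{\kappa}\ln(4\kappa^{3/2}/\zeta)\}$ with $\kappa=(M+2\epsilon)/\epsilon$ if capCG is true, else $k_{\max}=n$. Set $y_0=0,r_0=g,p_0=-g,j=0$. While $j<k_{\max}$: if $p_j^T(H+2\epsilon I)p_j\le\epsilon\|p_j\|^2$, return $s=y_j+\sigma p_j$ with $\sigma\ge0$, $\|s\|=\delta$, flag BND-NEG; set $\alpha_j=\|r_j\|^2/(p_j^T(H+2\epsilon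 I)p_j)$, $y_{j+1}=y_j+\alpha_jp_j$; if $\|y_{j+1}\|\ge\delta$, return $s=y_j+\sigma p_j$ with $\sigma\ge0$, $\|s\|=\delta$, flag BND-NORM; set $r_{j+1}=r_j+\alpha_j(H+2\epsilon I)p_j$; if $\|r_{j+1}\|\le\tfrac\zeta2\min\{\|g\|,\epsilon\|y_{j+1}\|\}$, return $s=y_{j+1}$, flag INT-RES; set $\beta_{j+1}=\|r_{j+1}\|^2/\|r_j\|^2$, $p_{j+1}=-r_{j+1}+\beta_{j+1}p_j$, $j\leftarrow j+1$. On loop exit return $s=y_j$, flag INT-MAX. Algorithm 3 (minimum eigenvalue oracle, MEO; inputs $g$, $H\in\mathbb{S}^n$, $\epsilon>0$, $\delta>0$, $\xi\in(0,1)$, $M\ge\|H\|$): a possibly randomized procedure that either returns $s=\pm\delta v$ with $\|v\|=1$, $v^THv\le-\epsilon/2$, satisfying $g^Ts\le0$, $s^THs\le-\tfrac12\epsilon\|s\|^2$, $\|s\|=\delta$, or returns an indication that $H\succeq-\epsilon I$. Algorithm 4 (inexact trust-region Newton-CG). Inputs: $\epsilon_g,\epsilon_H>0$; $\gamma_1\in(0,1)$, $\gamma_2\ge1$, $\psi\in(1/\gamma_2,1]$; $x_0$; $\delta_0>0$; $\delta_{\max}\ge\delta_0$; $\eta\in(0,1)$; $\zeta\in(0,1)$; $\xi\in[0,1)$; capCG; $M\ge L_g$. For $k=0,1,\dots$: evaluate $g_k,H_k$. If $g_k\ne0$, call Algorithm 2 with $(g_k,H_k,\epsilon_H,\delta_k,\zeta,\text{capCG},M)$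 obtaining $s_k^{CG}$ and flag outCG; else set $s_k^{CG}=0$, outCG$=$INT-RES. If outCG$\in\{$BND-NEG, BND-NORM$\}$ or ($\|g_k\|>\epsilon_g$ and outCG$=$INT-RES), set $s_k=s_k^{CG}$. Otherwise call Algorithm 3 with $(g_k,H_k,\epsilon_H,\delta_k,\xi,M)$; if it indicates $H_k\succeq-\epsilon_HI$, return $x_k$ (terminate), else take its output as $s_k$. Set $\rho_k=\frac{f_k-f(x_k+s_k)}{m_k(x_k)-m_k(x_k+s_k)}$. If $\rho_k\ge\eta$: $x_{k+1}=x_k+s_k$ and $\delta_{k+1}=\min\{\gamma_2\delta_k,\delta_{\max}\}$ if $\|s_k\|\ge\psi\delta_k$, else $\delta_{k+1}=\delta_k$. If $\rho_k<\eta$: $x_{k+1}=x_k$, $\delta_{k+1}=\gamma_1\|s_k\|$. $\mathcal{K}$ is the set of indices $k$ such that iteration $k$ is completed without termination (for the given realization); $\mathcal{U}=\{k\in\mathcal{K}:\rho_k<\eta\}$. Standing assumption: $\{f_k\}$ is bounded below by some $f_{\rm low}\in\mathbb{R}$, and all segments $[x_k,x_k+s_k]$ lie in an open set on which $f$ is twice continuously differentiable with gradient Lipschitz with constant $L_g>0$ and Hessian Lipschitz with constant $L_H>0$. *)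

(* Defs.v *)
From mathcomp Require Import all_boot all_order all_algebra.
Import Order.TTheory GRing.Theory Num.Theory.
From mathcomp Require Import all_classical all_reals all_analysis.
Set Implicit Arguments. Unset Strict Implicit. Unset Printing Implicit Defensive.
Local Open Scope ring_scope.
Local Open Scope classical_set_scope.

Section Defs.
Variable R : realType.
Variable n : nat.
Local Notation vec := 'cV[R]_n.
Local Notation mat := 'M[R]_n.

Definition dotv (u v : vec) : R := (u^T *m v) 0 0.
Definition enorm (u : vec) : R := Num.sqrt (dotv u u).

Definition quadf (A : mat) (p : vec) : R := dotv p (A *m p).

Inductive cg_flag := BND_NEG | BND_NORM | INT_RES | INT_MAX.
Definition cg_flag_eqb (a b : cg_flag) : bool :=
  match a, b with
  | BND_NEG, BND_NEG | BND_NORM, BND_NORM | INT_RES, INT_RES | INT_MAX, INT_MAX => true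
  | _, _ => false end.

(** k_max of Algorithm 2 (a real number; the loop runs while j < k_max). *)
Definition cg_kmax (eps zeta : R) (capCG : bool) (M : R) : R :=
  if capCG then
    let kappa := (M + 2 * eps) / eps in
    Num.min (n%:R) (2^-1 * Num.sqrt kappa * ln (4 * (kappa * Num.sqrt kappa) / zeta))
  else n%:R.

(** Algorithm 2 (truncated CG), in exact arithmetic, as a relation between its
    inputs and its possible outputs (s, flag).  J is the index j at which the
    algorithm returns; y, r, p are the CG iterates. *)
Definition trunc_CG (g : vec) (H : mat) (eps delta zeta : R) (capCG : bool)
    (M : R) (s : vec) (flag : cg_flag) : Prop :=
  let Hb := H + (2 * eps)%:M in
  let kmax := cg_kmax eps zeta capCG M in
  exists (J : nat) (y r p : nat -> vec),
    [/\ y 0%N = 0, r 0%N = g, p 0%N = - g,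
     (forall j : nat, (j < J)%N ->
        let alpha := enorm (r j) ^+ 2 / quadf Hb (p j) in
        [/\ j%:R < kmax,
            ~ (quadf Hb (p j) <= eps * enorm (p j) ^+ 2),
            y j.+1 = y j + alpha *: p j,
            ~ (enorm (y j.+1) >= delta) &
          [/\ r j.+1 = r j + alpha *: (Hb *m p j),
            ~ (enorm (r j.+1) <= zeta / 2 * Num.min (enorm g) (eps * enorm (y j.+1))) &
            p j.+1 = - r j.+1 + (enorm (r j.+1) ^+ 2 / enorm (r j) ^+ 2) *: p j]])
     &
     (let alpha := enorm (r J) ^+ 2 / quadf Hb (p J) in
     let yJ1 := y J + alpha *: p J in
     let rJ1 := r J + alpha *: (Hb *m p J) in
     [\/ [/\ J%:R < kmax, quadf Hb (p J) <= eps * enorm (p J) ^+ 2, flag = BND_NEG &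
             (exists2 sigma : R, 0 <= sigma & s = y J + sigma *: p J /\ enorm s = delta)],
         [/\ J%:R < kmax, ~ (quadf Hb (p J) <= eps * enorm (p J) ^+ 2),
             enorm yJ1 >= delta, flag = BND_NORM &
             (exists2 sigma : R, 0 <= sigma & s = y J + sigma *: p J /\ enorm s = delta)],
         [/\ J%:R < kmax, ~ (quadf Hb (p J) <= eps * enorm (p J) ^+ 2),
             ~ (enorm yJ1 >= delta) &
            [/\ enorm rJ1 <= zeta / 2 * Num.min (enorm g) (eps * enorm yJ1),
             flag = INT_RES & s = yJ1]] |
         [/\ ~ (J%:R < kmax), flag = INT_MAX & s = y J]])].

(** Algorithm 3 (minimum eigenvalue oracle), possibly randomized: for a given
    realization its output is either [Some s] with the stated properties, or
    [None], meaning it indicates H >= -eps I (the indication may be wrong,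
    with some probability, for a randomized oracle). *)
Definition MEO_output (g : vec) (H : mat) (eps delta : R) (out : option vec) : Prop :=
  match out with
  | Some s => exists v : vec, [/\ enorm v = 1, quadf H v <= - eps / 2,
                 (s = delta *: v \/ s = - (delta *: v)),
                 dotv g s <= 0 &
                 [/\ quadf H s <= - (2^-1 * eps * enorm s ^+ 2) & enorm s = delta]]
  | None => True
  end.

Definition model (fk : R) (gk : vec) (Hk : mat) (s : vec) : R :=
  fk + dotv gk s + 2^-1 * quadf Hk s.

(** Data of one realization of Algorithm 4.  For iteration k:
    x k, delta k : iterate and radius;  sCG k, outCG k : result of the CG step;
    meo k : output of the MEO (only meaningful when it is called);
    s k : the trial step. *)
Record run_data := RunData {
  rx : nat -> vec; rdelta : nat -> R;
  rsCG : nat -> vec; routCG : nat -> cg_flag;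
  rmeo : nat -> option vec; rs : nat -> vec }.

Section Algo4.
Variables (f : vec -> R) (grad : vec -> vec) (hess : vec -> mat).
Variables (eps_g eps_H gamma1 gamma2 psi delta0 delta_max eta zeta xi : R).
Variables (capCG : bool) (M : R).
Variable D : run_data.

Definition use_CG (k : nat) : bool :=
  [|| cg_flag_eqb (routCG D k) BND_NEG, cg_flag_eqb (routCG D k) BND_NORM
    | (eps_g < enorm (grad (rx D k))) && cg_flag_eqb (routCG D k) INT_RES].

Definition terminates (k : nat) : bool := ~~ use_CG k && (rmeo D k == None).

Definition reached (k : nat) : Prop := forall j : nat, (j < k)%N -> ~~ terminates j.

Definition in_K (k : nat) : Prop := reached k /\ ~~ terminates k.

Definition rho (k : nat) : R :=
  let xk := rx D k in let sk := rs D k in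
  (f xk - f (xk + sk)) /
  (model (f xk) (grad xk) (hess xk) 0 - model (f xk) (grad xk) (hess xk) sk).

Definition in_U (k : nat) : Prop := in_K k /\ rho k < eta.

Definition iteration_spec (k : nat) : Prop :=
  let xk := rx D k in let gk := grad xk in let Hk := hess xk in
  let dk := rdelta D k in
  [/\ (gk != 0 -> trunc_CG gk Hk eps_H dk zeta capCG M (rsCG D k) (routCG D k)),
      (gk = 0 -> rsCG D k = 0 /\ routCG D k = INT_RES),
      (use_CG k -> rs D k = rsCG D k),
      (~~ use_CG k -> MEO_output gk Hk eps_H dk (rmeo D k) /\
                      forall s, rmeo D k = Some s -> rs D k = s) &
      (~~ terminates k ->
        (eta <= rho k ->
           rx D k.+1 = xk + rs D k /\
           rdelta D k.+1 = (if psi * dk <= enorm (rs D k)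
                            then Num.min (gamma2 * dk) delta_max else dk)) /\
        (rho k < eta ->
           rx D k.+1 = xk /\ rdelta D k.+1 = gamma1 * enorm (rs D k)))].

Definition algo4_run (x0 : vec) : Prop :=
  [/\ rx D 0%N = x0, rdelta D 0%N = delta0 &
      forall k, reached k -> iteration_spec k].

End Algo4.

Local Notation nvec := ('cV[R]_n : normedModType R).
Local Notation nmat := ('M[R]_n : normedModType R).

Definition C2_Lipschitz_on (S : set vec) (f : vec -> R) (grad : vec -> vec)
    (hess : vec -> mat) (L_g L_H : R) : Prop :=
  let f' : nvec -> R := f in
  let grad' : nvec -> nvec := grad in
  let hess' : nvec -> nmat := hess in
  [/\ open (S : set nvec),
      (forall x : nvec, S x -> differentiable f' x /\ forall v, 'd f' x v = dotv (grad x) v),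
      (forall x : nvec, S x -> differentiable grad' x /\ forall v, 'd grad' x v = hess x *m v),
      (forall x : nvec, S x -> hess' y @[y --> x] --> hess' x) &
     [/\ (forall x y, S x -> S y -> enorm (grad x - grad y) <= L_g * enorm (x - y)) &
      (forall x y, S x -> S y -> forall v,
          enorm ((hess x - hess y) *m v) <= L_H * enorm (x - y) * enorm v)]].

End Defs.

(* Main.v *)
Require Import Defs.
From mathcomp Require Import all_boot all_order all_algebra.
Import Order.TTheory GRing.Theory Num.Theory.
From mathcomp Require Import all_classical all_reals all_analysis.
From mathcomp Require Import ring lra.
From mathcomp Require Import zify.
Import numFieldNormedType.Exports.
Local Open Scope ring_scope.
Local Open Scope classical_set_scope.

Set Implicit Arguments. Unset Strict Implicit.
Section Lin.
Variables (R : realType) (n : nat).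
Local Notation vec := 'cV[R]_n.
Local Notation mat := 'M[R]_n.
Implicit Types (u v w : vec) (A : mat).

Lemma dotvE u v : dotv u v = \sum_i u i 0 * v i 0.
Proof. by rewrite /dotv !mxE; apply: eq_bigr => i _; rewrite mxE. Qed.
Lemma dotvC u v : dotv u v = dotv v u.
Proof. by rewrite !dotvE; apply: eq_bigr => i _; rewrite mulrC. Qed.
Lemma dotvDr u v w : dotv u (v + w) = dotv u v + dotv u w.
Proof. by rewrite /dotv mulmxDr mxE. Qed.
Lemma dotvDl u v w : dotv (v + w) u = dotv v u + dotv w u.
Proof. by rewrite dotvC dotvDr !(dotvC u). Qed.
Lemma dotvZr u v (a : R) : dotv u (a *: v) = a * dotv u v.
Proof. by rewrite /dotv -scalemxAr mxE. Qed.
Lemma dotvZl u v (a : R) : dotv (a *: v) u = a * dotv v u.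
Proof. by rewrite dotvC dotvZr dotvC. Qed.
Lemma dotvNr u v : dotv u (- v) = - dotv u v.
Proof. by rewrite -scaleN1r dotvZr mulN1r. Qed.
Lemma dotvNl u v : dotv (- v) u = - dotv v u.
Proof. by rewrite dotvC dotvNr dotvC. Qed.
Lemma dotv0r u : dotv u 0 = 0.
Proof. by rewrite /dotv mulmx0 mxE. Qed.
Lemma dotv0l u : dotv 0 u = 0.
Proof. by rewrite dotvC dotv0r. Qed.
Lemma dotv_ge0 u : 0 <= dotv u u.
Proof. by rewrite dotvE; apply: sumr_ge0 => i _; rewrite -expr2 sqr_ge0. Qed.
Lemma dotv_eq0 u : dotv u u = 0 -> u = 0.
Proof.
rewrite dotvE => /eqP; rewrite psumr_eq0; last by move=> i _; rewrite -expr2 sqr_ge0.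
move=> /allP H; apply/matrixP => i j; rewrite (ord1 j) mxE.
have := H i (mem_index_enum i); rewrite -expr2 sqrf_eq0 => /eqP //.
Qed.
Lemma enorm_sq u : enorm u ^+ 2 = dotv u u.
Proof. by rewrite /enorm sqr_sqrtr // dotv_ge0. Qed.
Lemma enorm_ge0 u : 0 <= enorm u.
Proof. exact: sqrtr_ge0. Qed.
Lemma enorm0 : enorm (0 : vec) = 0.
Proof. by rewrite /enorm dotv0r sqrtr0. Qed.
Lemma enormZ u (a : R) : enorm (a *: u) = `|a| * enorm u.
Proof.
by rewrite /enorm dotvZl dotvZr mulrA -expr2 sqrtrM ?sqr_ge0 // sqrtr_sqr.
Qed.
Lemma CS u v : dotv u v <= enorm u * enorm v.
Proof.
have [u0|un0] := eqVneq (dotv u u) 0.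
  by rewrite (@dotv_eq0 u u0) dotv0l mulr_ge0 // enorm_ge0.
set a := dotv u u; set b := dotv v v; set c := dotv u v.
have a0 : 0 < a by rewrite lt_def un0 dotv_ge0.
have h : 0 <= dotv (a *: v - c *: u) (a *: v - c *: u) by apply: dotv_ge0.
rewrite !(dotvDl, dotvDr, dotvNl, dotvNr, dotvZl, dotvZr) in h.
rewrite -/a -/b -/c (dotvC v u) -/c in h.
have h2 : c ^+ 2 <= a * b by nra.
rewrite /enorm -sqrtrM ?dotv_ge0 // -/a -/b.
apply: le_trans (ler_norm c) _.
by rewrite -sqrtr_sqr ler_sqrt // mulr_ge0 // dotv_ge0.
Qed.
Lemma dotv_mulmx u v A : dotv u (A *m v) = dotv (A^T *m u) v.
Proof. by rewrite /dotv trmx_mul trmxK mulmxA. Qed.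
Lemma mulmx_shift A (a : R) v : (A + a%:M) *m v = A *m v + a *: v.
Proof. by rewrite mulmxDl mul_scalar_mx. Qed.
End Lin.
Section Lin2.
Variables (R : realType) (n : nat).
Lemma CSabs (u v : 'cV[R]_n) : `|dotv u v| <= enorm u * enorm v.
Proof.
rewrite ler_norml CS andbT.
have := CS (- u) v; rewrite dotvNl.
have -> : enorm (- u) = enorm u by rewrite /enorm dotvNl dotvNr opprK.
by rewrite lerNl.
Qed.
End Lin2.

Unset Implicit Arguments.


Section CG.
Variables (R : realType) (n : nat).
Local Notation vec := 'cV[R]_n.
Local Notation mat := 'M[R]_n.
Variables (g : vec) (Hb : mat) (y r p : nat -> vec) (J : nat).
Hypothesis symH : forall u v : vec, dotv u (Hb *m v) = dotv v (Hb *m u).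
Hypothesis hy0 : y 0%N = 0.
Hypothesis hr0 : r 0%N = g.
Hypothesis hp0 : p 0%N = - g.
Hypothesis hstep : forall j, (j < J)%N ->
  [/\ 0 < quadf Hb (p j),
      y j.+1 = y j + (enorm (r j) ^+ 2 / quadf Hb (p j)) *: p j,
      r j.+1 = r j + (enorm (r j) ^+ 2 / quadf Hb (p j)) *: (Hb *m p j) &
      p j.+1 = - r j.+1 + (enorm (r j.+1) ^+ 2 / enorm (r j) ^+ 2) *: p j].
Hypothesis hrnz : forall j, (j <= J)%N -> 0 < dotv (r j) (r j).

Definition qf (u : vec) := dotv g u + 2^-1 * quadf Hb u.

Definition Inv j := [/\ r j = g + Hb *m y j, dotv (p j) (r j) = - dotv (r j) (r j),
  (forall i, (i < j)%N -> dotv (r i) (r j) = 0 /\ dotv (p i) (Hb *m p j) = 0),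
  dotv (y j) (Hb *m p j) = 0 &
  [/\ dotv (y j) (r j) = 0, 0 <= dotv (y j) (p j) & qf (y j) <= 0]].

Ltac expand := rewrite ?(dotvDl, dotvDr, dotvNl, dotvNr, dotvZl, dotvZr, mulmxDr, mulmxN, dotv0l, dotv0r, mulmx0, mulmxBr); rewrite -?scalemxAr; rewrite ?(dotvDl, dotvDr, dotvNl, dotvNr, dotvZl, dotvZr).

Lemma qf0 : qf 0 = 0.
Proof. by rewrite /qf /quadf mulmx0 !dotv0r mulr0 addr0. Qed.

Lemma inv_all j : (j <= J)%N -> Inv j.
Proof.
elim: j => [_|j IH hj].
  split.
  - by rewrite hy0 mulmx0 addr0 hr0.
  - by rewrite hp0 hr0 dotvNl.
  - by [].
  - by rewrite hy0 dotv0l.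
  - by rewrite hy0 !dotv0l qf0; split.
have hjJ : (j < J)%N by [].
have [ih_a ih_b ih_o ih_d [ih_e ih_f ih_g]] := IH (ltnW hj).
have [cpos ey er ep] := hstep j hjJ.
rewrite /quadf in cpos ey er.
rewrite !enorm_sq in ey er ep.
set c := dotv (p j) (Hb *m p j) in cpos ey er ep.
set rr := dotv (r j) (r j) in ey er ep ih_b.
set a := rr / c in ey er.
have rrpos : 0 < rr by apply: hrnz; exact: ltnW.
have rr'pos : 0 < dotv (r j.+1) (r j.+1) by apply: hrnz.
set rr' := dotv (r j.+1) (r j.+1) in ep rr'pos.
have apos : 0 < a by rewrite /a divr_gt0.
have ac : a * c = rr by rewrite /a divfK // gt_eqF.
have rexpr : forall i, (i <= j)%N -> exists b, r i = - p i + b *: p i.-1 /\ (i = 0%N -> b = 0).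
  case=> [|i] hi.
    by exists 0; rewrite scale0r addr0 hp0 opprK hr0.
  have [_ _ _ epi] := hstep i (ltn_trans hi hjJ).
  exists (enorm (r i.+1) ^+ 2 / enorm (r i) ^+ 2); split => //.
  by rewrite epi opprD opprK addrNK.
have rHp_lt : forall i, (i < j)%N -> dotv (r i) (Hb *m p j) = 0.
  move=> i hi; have [b [-> _]] := rexpr i (ltnW hi).
  expand; rewrite (proj2 (ih_o i hi)) (proj2 (ih_o i.-1 _)) ?mulr0 ?oppr0 ?addr0 //.
  by apply: leq_ltn_trans hi; exact: leq_pred.
have rHp_eq : dotv (r j) (Hb *m p j) = - c.
  have [b [-> hb]] := rexpr j (leqnn j).
  expand.
  have -> : b * dotv (p j.-1) (Hb *m p j) = 0.
    case: (ltnP 0 j) => [jp|j0].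
      by rewrite (proj2 (ih_o j.-1 _)) ?mulr0 //; lia.
    by rewrite hb ?mul0r //; lia.
  by rewrite /c addr0.
have a0 : a != 0 by rewrite gt_eqF.
have c0 : c != 0 by rewrite gt_eqF.
have rr0 : rr != 0 by rewrite gt_eqF.
have F1 : dotv (p j) (r j.+1) = 0.
  by rewrite er; expand; rewrite ih_b -/c ac addNr.
have R_or : forall i, (i <= j)%N -> dotv (r i) (r j.+1) = 0.
  move=> i; rewrite leq_eqVlt => /orP[/eqP ->|hi].
    by rewrite er; expand; rewrite rHp_eq -/rr mulrN ac subrr.
  by rewrite er; expand; rewrite (proj1 (ih_o i hi)) rHp_lt // mulr0 addr0.
have key : forall i u, (i < J)%N -> exists2 ai, 0 < ai &
    ai * dotv u (Hb *m p i) = dotv u (r i.+1) - dotv u (r i).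
  move=> i u hi; have [cpi _ eri _] := hstep i hi.
  exists (enorm (r i) ^+ 2 / quadf Hb (p i)).
    by rewrite divr_gt0 // enorm_sq hrnz // ltnW.
  by rewrite eri; expand; rewrite addrAC subrr add0r.
have P_or : forall i, (i <= j)%N -> dotv (p i) (Hb *m p j.+1) = 0.
  move=> i hi; rewrite ep; expand; rewrite symH.
  move: hi; rewrite leq_eqVlt => /orP[/eqP ei|hi].
    subst i.
    have eX : rr' = a * dotv (r j.+1) (Hb *m p j).
      rewrite /rr' {2}er; expand.
      by rewrite (dotvC (r j.+1) (r j)) (R_or j (leqnn j)) add0r.
    rewrite -/c eX -ac; field.
    by rewrite a0 c0.
  have [ai aipos eai] := key i (r j.+1) (ltn_trans hi hjJ).
  rewrite (proj2 (ih_o i hi)) mulr0 addr0.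
  rewrite (dotvC _ (r i.+1)) (dotvC _ (r i)) (R_or i.+1 hi) (R_or i (ltnW hi)) subrr in eai.
  have := eai; move/eqP; rewrite mulf_eq0 gt_eqF //= => /eqP ->.
  by rewrite oppr0.
have ha' : r j.+1 = g + Hb *m y j.+1.
  by rewrite er ey ih_a mulmxDr -scalemxAr addrA.
have hpg : dotv (p j) g = - rr.
  by move: ih_b; rewrite {1}ih_a dotvDr symH ih_d addr0.
have he' : dotv (y j.+1) (r j.+1) = 0.
  rewrite ey er; expand; rewrite ih_e ih_d ih_b -/c ac; ring.
split.
- exact: ha'.
- by rewrite ep; expand; rewrite F1 mulr0 addr0.
- by move=> i; rewrite ltnS => hi; split; [exact: R_or|exact: P_or].
- rewrite ep; expand; rewrite symH.
  have -> : Hb *m y j.+1 = r j.+1 - g by rewrite ha' addrC addKr.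
  expand; rewrite (dotvC _ g) -hr0 (R_or 0%N (leq0n j)) subr0 -/rr'.
  rewrite ey; expand; rewrite ih_d -/c ac add0r.
  by field.
- split.
  + exact: he'.
  + rewrite ep; expand; rewrite he' oppr0 add0r.
    rewrite ey; expand.
    apply: mulr_ge0; first by apply: divr_ge0; apply: ltW.
    by apply: addr_ge0 => //; apply: mulr_ge0; [exact: ltW|exact: dotv_ge0].
  + have -> : qf (y j.+1) = qf (y j) - a * rr / 2.
      rewrite /qf /quadf ey; expand.
      rewrite (dotvC g (p j)) hpg ih_d (symH (p j) (y j)) ih_d -/c -ac.
      by field.
    have : 0 < a * rr by apply: mulr_gt0.
    lra.
Qed.
End CG.
Arguments qf {R n}.

Set Implicit Arguments. Unset Strict Implicit.
Section CGF.
Variables (R : realType) (n : nat).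
Local Notation vec := 'cV[R]_n.
Local Notation mat := 'M[R]_n.

Ltac expand := rewrite ?(dotvDl, dotvDr, dotvNl, dotvNr, dotvZl, dotvZr, mulmxDr, mulmxN, dotv0l, dotv0r, mulmx0, mulmxBr); rewrite -?scalemxAr; rewrite ?(dotvDl, dotvDr, dotvNl, dotvNr, dotvZl, dotvZr).

Lemma notle_lt (a b : R) : ~ (a <= b) -> b < a.
Proof. by move=> h; rewrite ltNge; apply/negP. Qed.

Lemma dotv_gt0 (u : vec) : u != 0 -> 0 < dotv u u.
Proof.
move=> hu; rewrite lt_def dotv_ge0 andbT; apply/eqP => h.
by move: hu; rewrite (dotv_eq0 h) eqxx.
Qed.

Lemma qf_line (g : vec) (Hb : mat) (u v : vec) (sg : R) :
  (forall u v : vec, dotv u (Hb *m v) = dotv v (Hb *m u)) ->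
  qf g Hb (u + sg *: v) = qf g Hb u + sg * dotv v (g + Hb *m u) + sg ^+ 2 / 2 * quadf Hb v.
Proof.
move=> symH; rewrite /qf /quadf; expand.
rewrite (symH v u) (dotvC g v); by field.
Qed.

Lemma cg_decrease (g : vec) (H : mat) (eps delta zeta : R) capCG M s flag :
  g != 0 -> (forall u v : vec, dotv u (H *m v) = dotv v (H *m u)) ->
  0 < eps -> 0 < delta -> 0 < zeta ->
  trunc_CG g H eps delta zeta capCG M s flag -> flag <> INT_MAX ->
  [/\ enorm s <= delta, s != 0 &
      eps / 4 * enorm s ^+ 2 <= - (dotv g s + 2^-1 * quadf H s)].
Proof.
move=> gnz symH epos dpos zpos [J [y [r [p [hy0 hr0 hp0 hsteps hret]]]]] hflag.
set Hb := H + (2 * eps)%:M in hsteps hret.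
have symHb : forall u v : vec, dotv u (Hb *m v) = dotv v (Hb *m u).
  by move=> u v; rewrite !mulmx_shift !dotvDr !dotvZr symH (dotvC u v).
have hstep : forall j, (j < J)%N ->
  [/\ 0 < quadf Hb (p j),
      y j.+1 = y j + (enorm (r j) ^+ 2 / quadf Hb (p j)) *: p j,
      r j.+1 = r j + (enorm (r j) ^+ 2 / quadf Hb (p j)) *: (Hb *m p j) &
      p j.+1 = - r j.+1 + (enorm (r j.+1) ^+ 2 / enorm (r j) ^+ 2) *: p j].
  move=> j hj; case: (hsteps j hj) => _ hc ey _ [er _ ep]; split => //.
  have h := notle_lt hc; apply: le_lt_trans h.
  by apply: mulr_ge0; [exact: ltW | exact: sqr_ge0].
have hrnz : forall j, (j <= J)%N -> 0 < dotv (r j) (r j).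
  case=> [|j] hj; first by rewrite hr0 dotv_gt0.
  case: (hsteps j hj) => _ _ _ _ [_ hr _].
  have h := notle_lt hr.
  have h0 : 0 <= zeta / 2 * Num.min (enorm g) (eps * enorm (y j.+1)).
    apply: mulr_ge0; first by apply: divr_ge0 => //; exact: ltW.
    by rewrite le_min enorm_ge0 mulr_ge0 ?enorm_ge0 //; exact: ltW.
  rewrite -enorm_sq; apply: exprn_gt0; exact: le_lt_trans h0 h.
have [ia ib _ _ [_ iyp iq]] :=
  @inv_all _ _ g Hb y r p J symHb hy0 hr0 hp0 hstep hrnz J (leqnn J).
have yJlt : enorm (y J) < delta.
  case: (posnP J) => [->|Jp]; first by rewrite hy0 enorm0.
  have hJ : (J.-1 < J)%N by rewrite prednK.
  case: (hsteps _ hJ) => _ _ _ h _; move: h; rewrite prednK // => h.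
  exact: notle_lt h.
have RRpos := hrnz J (leqnn J).
have predE : forall u : vec, - (dotv g u + 2^-1 * quadf H u) = - qf g Hb u + eps * dotv u u.
  by move=> u; rewrite /qf /quadf mulmx_shift dotvDr dotvZr; field.
have qline : forall sg : R, qf g Hb (y J + sg *: p J) =
    qf g Hb (y J) - sg * dotv (r J) (r J) + sg ^+ 2 / 2 * quadf Hb (p J).
  by move=> sg; rewrite qf_line // -ia ib mulrN.
have nline : forall sg : R, dotv (y J + sg *: p J) (y J + sg *: p J) =
    dotv (y J) (y J) + 2 * sg * dotv (y J) (p J) + sg ^+ 2 * dotv (p J) (p J).
  by move=> sg; expand; rewrite (dotvC (p J) (y J)); ring.
have Y2ge0 := dotv_ge0 (y J).
have P2ge0 := dotv_ge0 (p J).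
move: hret => /=.
rewrite !enorm_sq.
set Q := qf g Hb (y J) in iq qline.
set RR := dotv (r J) (r J) in RRpos qline.
set c := quadf Hb (p J) in qline.
set YP := dotv (y J) (p J) in iyp nline.
set Y2 := dotv (y J) (y J) in Y2ge0 nline.
set P2 := dotv (p J) (p J) in P2ge0 nline.
case => [[_ hc hf [sg sg0 [es ens]]] | [_ hc hnorm hf [sg sg0 [es ens]]] |
         [_ hc hnorm [_ hf es]] | [_ hf _]].
- rewrite -/c -/P2 in hc.
  split; first by rewrite ens.
    by apply/eqP => s0; move: ens; rewrite s0 enorm0 => d0; move: dpos; rewrite -d0 ltxx.
  rewrite predE es qline nline.
  have h1 : 0 <= sg ^+ 2 * (eps * P2 - c) by apply: mulr_ge0; [exact: sqr_ge0|rewrite subr_ge0].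
  have h2 : 0 <= eps * Y2 by apply: mulr_ge0 => //; exact: ltW.
  have h3 : 0 <= eps * (sg * YP) by apply: mulr_ge0; [exact: ltW|exact: mulr_ge0].
  have h4 : 0 <= sg * RR by apply: mulr_ge0 => //; exact: ltW.
  have h5 : 0 <= eps * (sg ^+ 2 * P2) by apply: mulr_ge0; [exact: ltW|apply: mulr_ge0 => //; exact: sqr_ge0].
  nra.
- rewrite -/c -/P2 in hc; have hc' := notle_lt hc.
  have cpos : 0 < c by apply: le_lt_trans hc'; apply: mulr_ge0 => //; exact: ltW.
  have P2pos : 0 < P2.
    rewrite /P2 dotv_gt0 //; apply/eqP => p0; move: cpos; rewrite /c p0 /quadf mulmx0 dotv0r ltxx //.
  set al := RR / c in hnorm.
  have alc : al * c = RR by rewrite /al divfK // gt_eqF.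
  have alpos : 0 < al by rewrite divr_gt0.
  have hsq : delta ^+ 2 <= dotv (y J + al *: p J) (y J + al *: p J).
    rewrite -enorm_sq; have := enorm_ge0 (y J + al *: p J); have := ltW dpos; nra.
  have sq2 : dotv s s = delta ^+ 2 by rewrite -enorm_sq ens.
  rewrite nline in hsq; rewrite es nline in sq2.
  have sgal : sg <= al.
    rewrite leNgt; apply/negP => hlt.
    have : 0 < (sg - al) * (sg + al) * P2 by apply: mulr_gt0 => //; apply: mulr_gt0; lra.
    have : 0 <= (sg - al) * YP by apply: mulr_ge0 => //; lra.
    nra.
  split; first by rewrite ens.
    by apply/eqP => s0; move: ens; rewrite s0 enorm0 => d0; move: dpos; rewrite -d0 ltxx.
  rewrite predE es qline nline.
  have h1 : sg * c <= RR by rewrite -alc ler_pM2r.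
  have h2 : 0 <= sg * (RR - sg * c) by apply: mulr_ge0 => //; rewrite subr_ge0.
  have h3 : 0 <= eps * Y2 by apply: mulr_ge0 => //; exact: ltW.
  have h4 : 0 <= eps * (sg * YP) by apply: mulr_ge0; [exact: ltW|exact: mulr_ge0].
  have h5 : 0 <= eps * (sg ^+ 2 * P2) by apply: mulr_ge0; [exact: ltW|apply: mulr_ge0 => //; exact: sqr_ge0].
  have h6 : 0 <= sg * RR by apply: mulr_ge0 => //; exact: ltW.
  nra.
- rewrite -/c -/P2 in hc; have hc' := notle_lt hc.
  have cpos : 0 < c by apply: le_lt_trans hc'; apply: mulr_ge0 => //; exact: ltW.
  set al := RR / c in hnorm es.
  have alc : al * c = RR by rewrite /al divfK // gt_eqF.
  have alpos : 0 < al by rewrite divr_gt0.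
  have qs : qf g Hb s = Q - al * RR / 2.
    by rewrite es qline -alc; field.
  have qneg : qf g Hb s < 0.
    rewrite qs; have : 0 < al * RR by apply: mulr_gt0.
    lra.
  split.
  + rewrite es; apply: ltW; exact: notle_lt hnorm.
  + apply/eqP => s0; move: qneg; rewrite s0 qf0 ltxx //.
  + rewrite predE.
    have : 0 <= dotv s s := dotv_ge0 s.
    have : 0 < eps := epos.
    nra.
- by move: hflag; rewrite hf.
Qed.
End CGF.

Set Implicit Arguments. Unset Strict Implicit.
Section An.
Variables (R : realType) (n : nat).
Local Notation vec := 'cV[R]_n.

Lemma is_derive_dotv (G : R -> vec) (dG s : vec) (t : R) :
  is_derive t 1 G dG -> is_derive t 1 (fun x => dotv (G x) s) (dotv dG s).
Proof.
move=> hG.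
have dG' : derivable G t 1 by case: hG.
have hc : forall i, is_derive t 1 (fun x => G x i 0) (dG i 0).
  move=> i; have di := (derivable_mxP G t 1).1 dG' i 0.
  apply: DeriveDef => //.
  have := derive_mx dG'; rewrite derive_val => ->; by rewrite mxE.
have -> : (fun x => dotv (G x) s) = \sum_(i < n) ((s i 0) \*: (fun x => G x i 0)).
  apply/funext => x; rewrite dotvE fct_sumE; apply: eq_bigr => i _.
  by rewrite /= mulrC.
rewrite dotvE.
have -> : \sum_(i < n) dG i 0 * s i 0 = \sum_(i < n) (s i 0 *: dG i 0).
  by apply: eq_bigr => i _; rewrite mulrC.
by apply: is_derive_sum => i.
Qed.
End An.

Section An1.
Variables (R : realType) (V W : normedModType R).
Lemma derive_line (h : V -> W) (x s : V) (u : R) :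
  differentiable h (x + u *: s) ->
  is_derive u 1 (fun t : R => h (x + t *: s)) ('d h (x + u *: s) s).
Proof.
move=> dh.
pose g := fun t : R => x + t *: s.
have dg : differentiable g u.
  rewrite /g. apply: differentiableD => //.
have hg : (fun t : R => h (x + t *: s)) = h \o g by [].
rewrite hg.
have dhg : differentiable (h \o g) u by apply: differentiable_comp.
have := derivableP (@diff_derivable _ _ _ _ _ (1:R) dhg).
rewrite deriveE // diff_comp //=.
suff -> : 'd g u 1 = s by [].
rewrite -deriveE //.
rewrite /g deriveD //; last exact: diff_derivable.
rewrite derive_cst add0r.
rewrite deriveE; last exact: differentiableZl.
rewrite diffZl //. 
by rewrite -deriveE // derive_id scale1r.
Qed.
End An1.
Section An2.
Variables (R : realType).
Lemma mvt01 (q q1 : R -> R) (a b : R) : a < b ->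
  (forall u : R, a <= u <= b -> is_derive u 1 q (q1 u)) ->
  exists2 c, a < c < b & q b - q a = q1 c * (b - a).
Proof.
move=> ab dq.
have dq' : forall x, x \in `]a, b[%R -> is_derive x 1 q (q1 x).
  move=> x; rewrite in_itv /= => /andP[h1 h2]; apply: dq.
  by rewrite !ltW.
have cq : {within `[a, b], continuous q}.
  apply: derivable_within_continuous => x; rewrite in_itv /= => hx.
  by have := dq x hx => -[].
have [c hc ->] := MVT ab dq' cq.
exists c => //; by move: hc; rewrite in_itv.
Qed.

Lemma taylor2_up (p p1 p2 : R -> R) (K : R) :
  (forall u : R, 0 <= u <= 1 -> is_derive u 1 p (p1 u)) ->
  (forall u : R, 0 <= u <= 1 -> is_derive u 1 p1 (p2 u)) ->
  (forall u : R, 0 <= u <= 1 -> p2 u - p2 0 <= K * u) ->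
  p 1 - p 0 - p1 0 - p2 0 / 2 <= K / 6.
Proof.
move=> d1 d2 hK.
pose q1 := fun u => p1 u - p1 0 - u * p2 0 - K * u^+2 / 2.
pose q2 := fun u => p2 u - p2 0 - K * u.
have dq1 : forall u : R, 0 <= u <= 1 -> is_derive u 1 q1 (q2 u).
  move=> u hu; have := d2 u hu => H2.
  rewrite /q1 /q2; apply: is_derive_eq.
  rewrite /GRing.scale /= !(mulr0, mulr1, addr0, subr0, add0r); by field.
have q1le : forall v : R, 0 <= v <= 1 -> q1 v <= 0.
  move=> v /andP[v0 v1]; case: (eqVneq v 0) => [->|vn0].
    by rewrite /q1 /=; lra.
  have v0' : 0 < v by rewrite lt_def vn0 v0.
  have [c /andP[c0 cv] e] : exists2 c, 0 < c < v & q1 v - q1 0 = q2 c * (v - 0).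
    apply: mvt01 => // x /andP[x0 xv]; apply: dq1; rewrite x0 /=; exact: le_trans xv v1.
  have hc : q2 c <= 0.
    have := hK c; rewrite /q2 (ltW c0) (le_trans (ltW cv) v1) /=; lra.
  have q10 : q1 0 = 0 by rewrite /q1 expr0n /=; ring.
  move: e; rewrite q10 subr0 subr0 => ->; nra.
pose q := fun u : R => p u - p 0 - u * p1 0 - u^+2 * p2 0 / 2 - K * u^+3 / 6.
have dq : forall u : R, 0 <= u <= 1 -> is_derive u 1 q (q1 u).
  move=> u hu; have := d1 u hu => H1.
  rewrite /q /q1; apply: is_derive_eq.
  rewrite /GRing.scale /= !(mulr0, mulr1, addr0, subr0, add0r); by field.
have [c /andP[c0 c1] e] : exists2 c, 0 < c < 1 & q 1 - q 0 = q1 c * (1 - 0).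
  apply: mvt01 => //; exact: ltr01.
have := q1le c; rewrite (ltW c0) (ltW c1) /= => hc.
have q0 : q 0 = 0 by rewrite /q !expr0n /=; ring.
move: e; rewrite q0 /q expr1n /=; lra.
Qed.

Lemma taylor2_abs (p p1 p2 : R -> R) (K : R) :
  (forall u : R, 0 <= u <= 1 -> is_derive u 1 p (p1 u)) ->
  (forall u : R, 0 <= u <= 1 -> is_derive u 1 p1 (p2 u)) ->
  (forall u : R, 0 <= u <= 1 -> `|p2 u - p2 0| <= K * u) ->
  `|p 1 - p 0 - p1 0 - p2 0 / 2| <= K / 6.
Proof.
move=> d1 d2 hK.
have up := taylor2_up d1 d2 (fun u hu => le_trans (ler_norm _) (hK u hu)).
have dn : - p 1 - - p 0 - - p1 0 - - p2 0 / 2 <= K / 6.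
  apply: (@taylor2_up (fun u => - p u) (fun u => - p1 u) (fun u => - p2 u)).
  - move=> u hu; have := d1 u hu => H1; exact: is_deriveN.
  - move=> u hu; have := d2 u hu => H2; exact: is_deriveN.
  - move=> u hu; apply: le_trans (hK u hu).
    have := ler_norm (- (p2 u - p2 0)); rewrite normrN; lra.
rewrite ler_norml; apply/andP; split; lra.
Qed.

Lemma taylor1_abs (p p1 : R -> R) (K : R) :
  (forall u : R, 0 <= u <= 1 -> is_derive u 1 p (p1 u)) ->
  (forall u : R, 0 <= u <= 1 -> `|p1 u - p1 0| <= K * u) ->
  `|p 1 - p 0 - p1 0| <= K.
Proof.
move=> d1 hK.
have [c /andP[c0 c1] e] := mvt01 ltr01 d1.
rewrite e subr0 mulr1.
have hc : `|p1 c - p1 0| <= K * c by apply: hK; rewrite !ltW.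
apply: le_trans hc _.
have K0 : 0 <= K.
  have h1 : `|p1 1 - p1 0| <= K * 1 by apply: hK; rewrite ler01 lexx.
  have := normr_ge0 (p1 1 - p1 0); rewrite mulr1 in h1; lra.
by rewrite ler_piMr // ltW.
Qed.
End An2.

Set Implicit Arguments. Unset Strict Implicit.
Section C2.
Variables (R : realType) (n : nat).
Local Notation vec := 'cV[R]_n.
Local Notation mat := 'M[R]_n.
Variables (S : set vec) (f : vec -> R) (grad : vec -> vec) (hess : vec -> mat) (Lg LH : R).
Hypothesis hC2 : C2_Lipschitz_on S f grad hess Lg LH.

Lemma derivs (z d w : vec) (t : R) : S (z + t *: d) ->
  is_derive t 1 (fun u => f (z + u *: d)) (dotv (grad (z + t *: d)) d) /\
  is_derive t 1 (fun u => dotv (grad (z + u *: d)) w) (dotv (hess (z + t *: d) *m d) w).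
Proof.
move=> hS; case: hC2 => _ hf hg _ _.
have [df edf] := hf _ hS; have [dg edg] := hg _ hS.
split.
  have := derive_line df; by rewrite edf.
have := derive_line dg; rewrite edg => H.
exact: is_derive_dotv.
Qed.

Lemma Lip_dot (x y d w : vec) : S x -> S y ->
  `|dotv ((hess x - hess y) *m d) w| <= LH * enorm (x - y) * enorm d * enorm w.
Proof.
move=> hx hy; case: hC2 => _ _ _ _ [_ hL].
apply: le_trans (CSabs _ _) _.
apply: ler_wpM2r; first exact: enorm_ge0.
exact: hL.
Qed.

Lemma enorm_seg (z d : vec) (u : R) : 0 <= u -> enorm (z + u *: d - z) = u * enorm d.
Proof. by move=> u0; rewrite addrC addKr enormZ ger0_norm. Qed.

Lemma taylor_seg (z d : vec) : (forall t : R, 0 <= t <= 1 -> S (z + t *: d)) ->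
  `|f (z + d) - f z - dotv (grad z) d - dotv (hess z *m d) d / 2| <= LH * enorm d ^+ 3 / 6.
Proof.
move=> hS.
have := @taylor2_abs R (fun u => f (z + u *: d)) (fun u => dotv (grad (z + u *: d)) d)
  (fun u => dotv (hess (z + u *: d) *m d) d) (LH * enorm d ^+ 3).
rewrite /= scale1r scale0r addr0; apply.
- by move=> u hu; case: (derivs d (hS u hu)).
- by move=> u hu; case: (derivs d (hS u hu)).
- move=> u hu; rewrite -dotvNl -dotvDl -mulNmx -mulmxDl.
  have hz : S z by have := hS 0; rewrite lexx ler01 scale0r addr0; apply.
  apply: le_trans (Lip_dot d d (hS u hu) hz) _.
  case/andP: hu => u0 _; rewrite enorm_seg //.
  by rewrite le_eqVlt; apply/orP; left; apply/eqP; ring.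
Qed.

Lemma grad_seg (z d w : vec) : (forall t : R, 0 <= t <= 1 -> S (z + t *: d)) ->
  `|dotv (grad (z + d)) w - dotv (grad z) w - dotv (hess z *m d) w| <= LH * enorm d ^+ 2 * enorm w.
Proof.
move=> hS.
have := @taylor1_abs R (fun u => dotv (grad (z + u *: d)) w)
  (fun u => dotv (hess (z + u *: d) *m d) w) (LH * enorm d ^+ 2 * enorm w).
rewrite /= scale1r scale0r addr0; apply.
- by move=> u hu; case: (derivs w (hS u hu)).
- move=> u hu; rewrite -dotvNl -dotvDl -mulNmx -mulmxDl.
  have hz : S z by have := hS 0; rewrite lexx ler01 scale0r addr0; apply.
  apply: le_trans (Lip_dot d w (hS u hu) hz) _.
  case/andP: hu => u0 _; rewrite enorm_seg //.
  by rewrite le_eqVlt; apply/orP; left; apply/eqP; ring.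
Qed.

Lemma sym_main (x h k : vec) :
  (forall al be : R, 0 <= al <= 1 -> 0 <= be <= 1 -> S (x + al *: h + be *: k)) ->
  `|dotv (hess x *m h) k - dotv (hess x *m k) h| <=
   LH * (enorm h ^+ 2 * enorm k + enorm h * enorm k ^+ 2 / 2 + enorm k ^+ 3 / 3 +
         enorm k ^+ 2 * enorm h + enorm k * enorm h ^+ 2 / 2 + enorm h ^+ 3 / 3).
Proof.
move=> P.
have i01 : forall u : R, 0 <= u <= 1 -> True by [].
have z01 : 0 <= (0:R) <= 1 by rewrite lexx ler01.
have o01 : 0 <= (1:R) <= 1 by rewrite lexx ler01.
have hx : S x by have := P 0 0 z01 z01; rewrite !scale0r !addr0.
have hxh : S (x + h) by have := P 1 0 o01 z01; rewrite scale1r scale0r addr0.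
have hxk : S (x + k) by have := P 0 1 z01 o01; rewrite scale1r scale0r addr0.
have T1 := @taylor_seg (x + h) k (fun u hu => ltac:(by have := P 1 u o01 hu; rewrite scale1r)).
have T2 := @taylor_seg x k (fun u hu => ltac:(by have := P 0 u z01 hu; rewrite scale0r addr0)).
have G1 := @grad_seg x h k (fun u hu => ltac:(by have := P u 0 hu z01; rewrite scale0r addr0)).
have L1 := Lip_dot k k hxh hx.
have T3 := @taylor_seg (x + k) h (fun u hu => ltac:(by have := P u 1 hu o01; rewrite scale1r addrAC)).
have T4 := @taylor_seg x h (fun u hu => ltac:(by have := P u 0 hu z01; rewrite scale0r addr0)).
have G2 := @grad_seg x k h (fun u hu => ltac:(by have := P 0 u z01 hu; rewrite scale0r addr0)).
have L2 := Lip_dot h h hxk hx.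
have ehx : x + h - x = h by rewrite addrAC subrr add0r.
have ekx : x + k - x = k by rewrite addrAC subrr add0r.
rewrite mulmxBl dotvDl dotvNl ehx in L1.
rewrite mulmxBl dotvDl dotvNl ekx in L2.
rewrite (addrAC x k h) in T3.
move: T1 T2 G1 L1 T3 T4 G2 L2; rewrite !ler_norml => /andP[? ?] /andP[? ?] /andP[? ?] /andP[? ?] /andP[? ?] /andP[? ?] /andP[? ?] /andP[? ?].
apply/andP; split; lra.
Qed.

Lemma hess_sym (x : vec) : S x -> forall a b : vec, dotv a (hess x *m b) = dotv b (hess x *m a).
Proof.
move=> hx a b.
have oS : open S by case: hC2.
have /nbhs_ballP [e e0 he] : nbhs x S by apply: open_nbhs_nbhs; split.
set X := dotv (hess x *m a) b; set Y := dotv (hess x *m b) a.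
set C := LH * (enorm a ^+ 2 * enorm b + enorm a * enorm b ^+ 2 / 2 + enorm b ^+ 3 / 3 +
         enorm b ^+ 2 * enorm a + enorm b * enorm a ^+ 2 / 2 + enorm a ^+ 3 / 3).
have key : forall t : R, 0 < t -> t * (`|a| + `|b|) < e -> `|X - Y| <= t * C.
  move=> t t0 te.
  have P : forall al be : R, 0 <= al <= 1 -> 0 <= be <= 1 ->
      S (x + al *: (t *: a) + be *: (t *: b)).
    move=> al be /andP[al0 al1] /andP[be0 be1]; apply: he.
    rewrite -ball_normE /ball_ /=.
    rewrite -addrA opprD addrA subrr add0r normrN.
    apply: le_lt_trans te.
    apply: le_trans (ler_normD _ _) _.
    rewrite !normrZ (ger0_norm (ltW t0)) (ger0_norm al0) (ger0_norm be0) mulrDr.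
    apply: lerD.
      by rewrite -[X in _ <= X]mul1r ler_wpM2r // mulr_ge0 // ltW.
    by rewrite -[X in _ <= X]mul1r ler_wpM2r // mulr_ge0 // ltW.
  have := sym_main P.
  rewrite -!scalemxAr !dotvZl !dotvZr !enormZ (ger0_norm (ltW t0)) -/X -/Y.
  have -> : t * (t * X) - t * (t * Y) = t ^+ 2 * (X - Y) by ring.
  rewrite normrM (ger0_norm (sqr_ge0 t)).
  have -> : forall ea eb : R, LH * ((t * ea) ^+ 2 * (t * eb) + t * ea * (t * eb) ^+ 2 / 2 + (t * eb) ^+ 3 / 3 +
         (t * eb) ^+ 2 * (t * ea) + t * eb * (t * ea) ^+ 2 / 2 + (t * ea) ^+ 3 / 3) =
      t ^+ 2 * (t * (LH * (ea ^+ 2 * eb + ea * eb ^+ 2 / 2 + eb ^+ 3 / 3 +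
         eb ^+ 2 * ea + eb * ea ^+ 2 / 2 + ea ^+ 3 / 3))).
    by move=> ea eb; ring.
  by rewrite ler_pM2l // exprn_gt0.
have Xe : dotv a (hess x *m b) = Y by rewrite dotvC.
have Ye : dotv b (hess x *m a) = X by rewrite dotvC.
rewrite Xe Ye; apply/eqP; rewrite eq_sym -subr_eq0 -normr_eq0; apply/eqP.
have D0 : 0 <= `|X - Y| := normr_ge0 _.
case: (ltP 0 `|X - Y|) => [Dpos|hle]; last by apply/le_anti; rewrite hle D0.
exfalso.
set D := `|X - Y| in D0 Dpos key.
set na := `|a| + `|b| in key.
have na0 : 0 <= na by apply: addr_ge0.
set t0 := e / (na + 1).
have na1 : 0 < na + 1 by apply: ltr_wpDl => //; exact: ltr01.
have t0pos : 0 < t0 by rewrite divr_gt0.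
have et0 : e = t0 * (na + 1) by rewrite /t0 divfK // gt_eqF.
have c1 : 0 < 2 * (`|C| + 1).
  by apply: mulr_gt0; [exact: ltr0Sn| apply: ltr_wpDl => //; exact: ltr01].
set t := Num.min (t0 / 2) (D / (2 * (`|C| + 1))).
have tpos : 0 < t by rewrite lt_min !divr_gt0.
have tle1 : t <= t0 / 2 by rewrite ge_min lexx.
have tle2 : t <= D / (2 * (`|C| + 1)) by rewrite ge_min lexx orbT.
have te : t * na < e.
  rewrite et0.
  have : t * na <= t0 / 2 * na by apply: ler_wpM2r.
  nra.
have hD := key t tpos te.
have h1 : t * C <= t * `|C| by apply: ler_wpM2l; [exact: ltW|exact: ler_norm].
have h2 : t * `|C| <= D / (2 * (`|C| + 1)) * `|C| by apply: ler_wpM2r => //; exact: normr_ge0.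
have h3 : D / (2 * (`|C| + 1)) * `|C| < D.
  rewrite mulrAC ltr_pdivrMr //.
  have := normr_ge0 C; nra.
have : D < D by apply: le_lt_trans h3; apply: le_trans h2; apply: le_trans h1.
by rewrite ltxx.
Qed.
End C2.

Unset Implicit Arguments.

Theorem lemma4p2 (R : realType) (n : nat)
  (f : 'cV[R]_n -> R) (grad : 'cV[R]_n -> 'cV[R]_n) (hess : 'cV[R]_n -> 'M[R]_n)
  (eps_g eps_H gamma1 gamma2 psi : R) (x0 : 'cV[R]_n)
  (delta0 delta_max eta zeta xi : R) (capCG : bool) (M L_g L_H : R)
  (D : run_data R n) :
  0 < eps_g -> 0 < eps_H ->
  0 < gamma1 < 1 -> 1 <= gamma2 -> gamma2^-1 < psi <= 1 ->
  0 < delta0 -> delta0 <= delta_max -> 0 < eta < 1 -> 0 < zeta < 1 ->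
  0 <= xi < 1 -> 0 < L_g -> 0 < L_H -> L_g <= M ->
  algo4_run f grad hess eps_g eps_H gamma1 gamma2 psi delta0 delta_max eta zeta
    capCG M D x0 ->
  (* standing assumption *)
  (exists f_low : R, forall k, reached grad eps_g D k -> f_low <= f (rx D k)) ->
  (exists S : set 'cV[R]_n,
     C2_Lipschitz_on S f grad hess L_g L_H /\
     forall k, in_K grad eps_g D k ->
       forall t : R, 0 <= t <= 1 -> S (rx D k + t *: rs D k)) ->
  (forall k, in_U f grad hess eps_g eta D k ->
     3 * (1 - eta) * eps_H / (2 * L_H) < rdelta D k) /\
  (let delta_min := Num.min delta0 (3 * gamma1 * (1 - eta) / (2 * L_H) * eps_H) in
   0 < delta_min /\ forall k, in_K grad eps_g D k -> delta_min <= rdelta D k).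

Proof.
move=> eg0 eH0 /andP[g10 g11] g21 /andP[psi1 psi2] d00 d0max /andP[eta0 eta1]
  /andP[z0 z1] /andP[xi0 xi1] Lg0 LH0 LgM [hx0 hd0 hspec] _ [S [hC2 hseg]].
set bound := 3 * (1 - eta) * eps_H / (2 * L_H).
have key : forall k, in_K grad eps_g D k -> 0 < rdelta D k ->
    enorm (rs D k) <= rdelta D k /\
    (rho f grad hess D k < eta -> bound < enorm (rs D k)).
  move=> k hK dpos.
  have [hreach hnt] := hK.
  have [hcg1 hcg2 hcg3 hmeo hupd] := hspec k hreach.
  have hxS : S (rx D k).
    by have := hseg k hK 0; rewrite lexx ler01 scale0r addr0; apply.
  have symH := hess_sym hC2 hxS.
  set x := rx D k in hcg1 hcg2 hcg3 hmeo hupd hxS symH *.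
  set s := rs D k in hcg3 hmeo hupd *.
  have [sle snz hdec] : [/\ enorm s <= rdelta D k, s != 0 &
      eps_H / 4 * enorm s ^+ 2 <= - (dotv (grad x) s + 2^-1 * quadf (hess x) s)].
    case: (boolP (use_CG grad eps_g D k)) => huse.
      have es := hcg3 huse.
      have gnz : grad x != 0.
        apply/eqP => g0; have [_ hflag] := hcg2 g0.
        move: huse; rewrite /use_CG hflag /= andbT -/x g0 enorm0 => h.
        by move: (lt_trans h eg0); rewrite ltxx.
      have hnm : routCG D k <> INT_MAX by move=> e; move: huse; rewrite /use_CG e /= andbF.
      rewrite es; exact: cg_decrease gnz symH eH0 dpos z0 (hcg1 gnz) hnm.
    move: hnt; rewrite /terminates huse /= => hn.
    have [hmo hs] := hmeo huse.
    move: hn hmo hs; case: (rmeo D k) => [s0|] //.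
    move=> _ [v [_ _ _ hgs [hqs ens]]] hs.
    have s0e : s = s0 by exact: hs.
    rewrite s0e; split.
    - by rewrite ens.
    - by apply/eqP => s00; move: ens; rewrite s00 enorm0 => e0; move: dpos; rewrite -e0 ltxx.
    - lra.
  split => // hrho.
  have T := taylor_seg hC2 (hseg k hK).
  rewrite (dotvC (hess x *m s) s) in T.
  change (dotv s (hess x *m s)) with (quadf (hess x) s) in T.
  have Tup := le_trans (ler_norm _) T.
  set pr := - (dotv (grad x) s + 2^-1 * quadf (hess x) s) in hdec.
  have ns0 : 0 < enorm s.
    rewrite lt_def enorm_ge0 andbT; apply/eqP => e0.
    have : dotv s s = 0 by rewrite -enorm_sq e0 expr0n.
    by move/dotv_eq0 => s0; move: snz; rewrite s0 eqxx.
  have ns2 : 0 < enorm s ^+ 2 by apply: exprn_gt0.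
  have prpos : 0 < pr.
    apply: lt_le_trans hdec; apply: mulr_gt0 => //; apply: divr_gt0 => //.
  have den : model (f x) (grad x) (hess x) 0 - model (f x) (grad x) (hess x) s = pr.
    by rewrite /pr /model /quadf mulmx0 !dotv0r; ring.
  move: hrho; rewrite /rho -/x -/s den ltr_pdivrMr // => hrho.
  have h1 : (1 - eta) * (eps_H / 4 * enorm s ^+ 2) <= (1 - eta) * pr.
    by apply: ler_wpM2l => //; lra.
  have h2 : (1 - eta) * pr < L_H * enorm s ^+ 3 / 6 by rewrite /pr in hrho h1 *; lra.
  have h3 : enorm s ^+ 2 * (3 * (1 - eta) * eps_H) < enorm s ^+ 2 * (enorm s * (2 * L_H)).
    lra.
  rewrite ltr_pM2l // in h3.
  by rewrite /bound ltr_pdivrMr // mulr_gt0.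
set dmin := Num.min delta0 (3 * gamma1 * (1 - eta) / (2 * L_H) * eps_H).
have LH2 : 0 < 2 * L_H by apply: mulr_gt0.
have dminpos : 0 < dmin.
  rewrite lt_min d00 /=; apply: mulr_gt0 => //; apply: divr_gt0 => //.
  apply: mulr_gt0; [apply: mulr_gt0 => //|lra].
have dmin2 : dmin <= gamma1 * bound.
  have -> : gamma1 * bound = 3 * gamma1 * (1 - eta) / (2 * L_H) * eps_H.
    by rewrite /bound; field; rewrite gt_eqF.
  by rewrite ge_min lexx orbT.
have ind : forall k, reached grad eps_g D k -> dmin <= rdelta D k /\ rdelta D k <= delta_max.
  elim=> [_|k IH hr].
    by rewrite hd0 ge_min lexx.
  have hrk : reached grad eps_g D k.
    by move=> j hj; apply: hr; exact: leqW.
  have hnt : ~~ terminates grad eps_g D k := hr k (ltnSn k).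
  have [lo hi] := IH hrk.
  have dpos : 0 < rdelta D k := lt_le_trans dminpos lo.
  have [sle sb] := key k (conj hrk hnt) dpos.
  have [_ _ _ _ hupd] := hspec k hrk.
  have [hsucc hfail] := hupd hnt.
  case: (leP eta (rho f grad hess D k)) => hr'.
  - have [_ ->] := hsucc hr'; case: ifP => _ //.
    split; last by rewrite ge_min lexx orbT.
    rewrite le_min; apply/andP; split; last exact: le_trans lo hi.
    apply: le_trans lo _; rewrite ler_peMl //; exact: ltW.
  - have [_ ->] := hfail hr'; have hb := sb hr'.
    split.
      apply: le_trans dmin2 _; apply: ler_wpM2l; [exact: ltW|exact: ltW].
    have := enorm_ge0 (rs D k); nra.
split.
- move=> k [[hr hnt] hrho]; have [lo _] := ind k hr.
  have dpos : 0 < rdelta D k := lt_le_trans dminpos lo.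
  have [sle sb] := key k (conj hr hnt) dpos.
  exact: lt_le_trans (sb hrho) sle.
- change (0 < dmin /\ forall k, in_K grad eps_g D k -> dmin <= rdelta D k).
  split => // k [hr _]; exact: (ind k hr).1.
Qed.
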